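(* Let $M=\{(x,y,z)\in\mathbb{C}^3: x^2+y^2+z^2=3xyz\}$ and let $\varphi^z_t$ denote the flow (defined for all $t\in\mathbb{C}$) of the vector field $V^z=(2y-3xz)\partial_x-(2x-3yz)\partial_y$ on $M$. Let $(x,y,z)\in M$ with $z\neq0$ and $4-9z^2\neq0$. Then the map \[ \mathbb{C}\ni t\mapsto\varphi^z_t(x,y,z)\in\{(u,v,z): u^2+v^2+z^2=3uvz\} \] is surjective.
   Context: The flow $\varphi^z_t$ preserves the $z$-coordinate, so its image lies in the indicated curve. *)

(* Defs.v *)
From HB Require Import structures.
From mathcomp Require Import all_boot all_order all_algebra.
From mathcomp Require Import complex.
From mathcomp Require Import all_classical all_reals all_analysis.
Set Implicit Arguments. Unset Strict Implicit. Unset Printing Implicit Defensive.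
Import Order.TTheory GRing.Theory Num.Theory.
Import numFieldNormedType.Exports.
Local Open Scope ring_scope.
Local Open Scope complex_scope.

(* The complex numbers, packaged as a numClosedFieldType so that the
   standard (complex) normed-module structure of MathComp-Analysis applies. *)
Definition Cx (R : realType) : numClosedFieldType := R[i].

Definition inM (R : realType) (x y z : Cx R) : Prop :=
  x ^+ 2 + y ^+ 2 + z ^+ 2 = 3%:R * x * y * z.

(* (X,Y,Z) : C -> C^3 is the (complex-time) integral curve of
   V^z = (2y - 3xz) d/dx - (2x - 3yz) d/dy through (x,y,z) at t = 0,
   i.e. t |-> phi^z_t(x,y,z); derivatives are complex derivatives. *)
Definition is_flow_Vz (R : realType) (X Y Z : Cx R -> Cx R) (x y z : Cx R) : Prop :=
  [/\ X 0 = x, Y 0 = y, Z 0 = z &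
   forall t : Cx R,
     [/\ is_derive t (1 : Cx R) X (2%:R * Y t - 3%:R * X t * Z t),
         is_derive t (1 : Cx R) Y (- (2%:R * X t - 3%:R * Y t * Z t)) &
         is_derive t (1 : Cx R) Z (0 : Cx R)]].

(* Main.v *)
Require Import Defs.
From HB Require Import structures.
From mathcomp Require Import all_boot all_order all_algebra.
From mathcomp Require Import complex.
From mathcomp Require Import all_classical all_reals all_analysis.
From mathcomp Require Import ring lra.
Import Order.TTheory GRing.Theory Num.Theory.
Import numFieldNormedType.Exports.
Local Open Scope ring_scope.
Local Open Scope complex_scope.
Local Open Scope classical_set_scope.
Section S.
Variable R : realType.
Local Notation C := (Cx R).

Lemma normC_real (h : R) : `|(h%:C : C)| = (`|h|)%:C.
Proof. by rewrite normc_def /= expr0n /= addr0 sqrtr_sqr. Qed.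

Lemma normRe_le (z : C) : (`|complex.Re z|)%:C <= `|z|.
Proof.
rewrite normc_def lecR -sqrtr_sqr ler_sqrt; last by rewrite addr_ge0 ?sqr_ge0.
by rewrite -[X in X <= _]addr0 lerD2l sqr_ge0.
Qed.

Lemma Re_cvg {T : Type} {F : set_system T} {FF : Filter F} {G : T -> C} {l : C} :
  G @ F --> l -> (fun t => complex.Re (G t)) @ F --> complex.Re l.
Proof.
move=> /cvgrPdist_lt H; apply/cvgrPdist_lt => e e0.
have e0' : (0 : C) < e%:C by rewrite ltcR.
move: (H _ e0'); apply: filter_app; near=> t => Ht.
rewrite -raddfB /= -(ltcR).
exact: le_lt_trans (normRe_le (l - G t)) Ht.
Unshelve. all: by end_near.
Qed.
Lemma pos_real {e : C} : 0 < e -> e = (complex.Re e)%:C /\ 0 < complex.Re e.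
Proof. by case: e => a b; rewrite ltcE /= => /andP[/eqP -> ha]. Qed.

Lemma RtoC_cvg {c : C} : c != 0 ->
  (fun h : R => (h%:C * c : C)) @ (0:R)^' --> (0:C)^'.
Proof.
move=> c0.
have Hc : (fun h : R => (h%:C * c : C)) @ (0:R)^' --> (0:C).
  apply/cvgrPdist_lt => e e0.
  have [eE e0r] := pos_real e0; rewrite eE.
  set n := Num.sqrt (complex.Re c ^+ 2 + complex.Im c ^+ 2).
  have n0 : 0 <= n by apply: sqrtr_ge0.
  have d0 : 0 < complex.Re e / (n + 1) by rewrite divr_gt0 // ltr_wpDl.
  near=> h.
  rewrite sub0r normrN normrM normC_real normc_def -/n -rmorphM /= ltcR.
  have hd : `|h| < complex.Re e / (n + 1) by near: h; apply: dnbhs0_lt.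
  apply: (le_lt_trans (y := `|h| * (n + 1))).
    by rewrite ler_wpM2l // lerDl.
  by rewrite -ltr_pdivlMr // ltr_wpDl.
move=> A /= HA.
have H : \forall h \near (0:R)^', h%:C * c != 0 -> A (h%:C * c) := Hc _ HA.
change (\forall h \near (0:R)^', A (h%:C * c)).
have H2 : \forall h \near (0:R)^', h != 0 := nbhs_dnbhs_neq 0.
near=> h; apply: (near H h); first by [].
have hne : h != 0 by apply: (near H2 h).
rewrite mulf_neq0 //; apply/eqP => /(congr1 (@complex.Re R)) /= /eqP.
by rewrite (negbTE hne).
Unshelve. all: by end_near.
Qed.

Lemma ReB (z w : C) : complex.Re (z - w) = complex.Re z - complex.Re w.
Proof. by case: z => a b; case: w. Qed.

Lemma ReM_real (a : R) (z : C) : complex.Re ((a%:C : C) * z) = a * complex.Re z.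
Proof. by case: z => u v /=; rewrite mul0r subr0. Qed.

Lemma real_complexV (h : R) : ((h^-1)%:C : C) = (h%:C)^-1.
Proof. by rewrite fmorphV. Qed.

Lemma deriv_re (f : C -> C) (x c d : C) (s : R) : c != 0 ->
  is_derive (x + s%:C * c) (1:C) f d ->
  is_derive s (1:R) (fun r : R => complex.Re (f (x + r%:C * c))) (complex.Re (c * d)).
Proof.
move=> c0 [Hder Hval].
set x' := x + s%:C * c.
have Hq : (fun k : C => k^-1 *: ((f \o shift x') (k *: 1) - f x')) @ (0:C)^' --> d.
  by rewrite -Hval; exact: Hder.
have Hg := cvg_comp _ _ (RtoC_cvg c0) Hq.
have Hm : (fun h : R => c * ((h%:C * c)^-1 *: ((f \o shift x') ((h%:C * c) *: 1) - f x'))) @ (0:R)^' --> c * d.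
  by apply: cvgM; [exact: cvg_cst | exact: Hg].
have Hre := Re_cvg (FF := dnbhs_filter (0:R)) Hm.
set P := (fun r : R => complex.Re (f (x + r%:C * c))).
have Hfin : (fun h : R => h^-1 *: ((P \o shift s) (h *: 1) - P s)) @ (0:R)^' --> complex.Re (c * d).
  eapply cvg_trans; last exact: Hre.
  apply: near_eq_cvg; near=> h.
  have hne : h != 0 by apply: (near (nbhs_dnbhs_neq (0:R)) h).
  rewrite /= /P /x' -!/(GRing.scale _ _) !/GRing.scale /= !mulr1 -ReB.
  have -> : x + (h + s)%:C * c = h%:C * c + (x + s%:C * c).
    by rewrite rmorphD /= mulrDl addrCA.
  have hC : (h%:C : C) != 0.
    by apply/eqP => /(congr1 (@complex.Re R)) /= /eqP; rewrite (negbTE hne).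
  set D := (f _ - f _).
  have -> : c * ((h%:C * c)^-1 * D) = (h^-1)%:C * D.
    by rewrite real_complexV; field; rewrite hC c0.
  by rewrite ReM_real.
split.
  by apply/cvg_ex; exists (complex.Re (c * d)).
exact: cvg_lim Hfin.
Unshelve. all: by end_near.
Qed.

Lemma eqC (z w : C) : complex.Re z = complex.Re w -> complex.Im z = complex.Im w -> z = w.
Proof. by case: z => a b; case: w => u v /= -> ->. Qed.

Lemma Re_mNi (w : C) : complex.Re (- 'i * w) = complex.Im w.
Proof. by case: w => a b /=; rewrite oppr0 mul0r sub0r mulN1r opprK. Qed.

Lemma line_const (f : C -> C) (x c : C) : c != 0 ->
  (forall t, is_derive t (1:C) f 0) -> forall s : R, f (x + s%:C * c) = f x.
Proof.
move=> c0 Hd s.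
have H0 : (0:R)%:C * c = 0 by rewrite mul0r.
apply: eqC.
  have Hr : forall r : R, is_derive r (1:R) (fun r : R => complex.Re (f (x + r%:C * c))) 0.
    by move=> r; have := deriv_re f x c 0 r c0 (Hd _); rewrite mulr0.
  have := @is_derive_0_is_cst _ _ s 0 Hr.
  by rewrite /= H0 addr0.
have Hd' : forall t, is_derive t (1:C) (fun t => - 'i * f t) 0.
  move=> t; have := is_deriveZ (- 'i) (Hd t).
  by rewrite scaler0 => H; exact: H.
have Hr : forall r : R, is_derive r (1:R) (fun r : R => complex.Re (- 'i * f (x + r%:C * c))) 0.
  move=> r.
  by have := deriv_re (fun t => - 'i * f t) x c 0 r c0 (Hd' _); rewrite mulr0.
have := @is_derive_0_is_cst _ _ s 0 Hr.
by rewrite /= H0 addr0 !Re_mNi.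
Qed.

Lemma const_deriv0 (f : C -> C) :
  (forall t, is_derive t (1:C) f 0) -> forall t, f t = f 0.
Proof.
move=> Hd t.
have -> : t = (complex.Re t)%:C + (complex.Im t)%:C * 'i.
  by case: t => a b; apply: eqC => /=; rewrite ?mul0r ?mulr0 ?mulr1 ?subr0 ?addr0 ?add0r.
rewrite line_const //; last by apply/eqP => /(congr1 (@complex.Im R)) /= /eqP; rewrite oner_eq0.
by rewrite -[X in f X = _](add0r) -[X in f (0 + X)]mulr1 line_const // oner_eq0.
Qed.

Lemma is_derive_mull (k r : R) : is_derive r (1:R) (fun r : R => k * r) k.
Proof.
have := is_deriveZ k (is_derive_id r (1:R)).
rewrite /= -[k *: 1]/(k * 1) mulr1 => H; exact: H.
Qed.

Lemma is_derive_compl (h : R -> R) (k r dh : R) :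
  is_derive (k * r) (1:R) h dh -> is_derive r (1:R) (fun r => h (k * r)) (dh * k).
Proof. move=> H; exact: (is_derive1_comp H (is_derive_mull k r)). Qed.

Lemma is_deriveM' (f g : R -> R) r df dg : is_derive r (1:R) f df -> is_derive r (1:R) g dg ->
  is_derive r (1:R) (fun r => f r * g r) (df * g r + f r * dg).
Proof.
move=> Hf Hg; apply: (is_derive_eq (is_deriveM Hf Hg)).
by rewrite addrC; congr (_ + _); exact: mulrC.
Qed.

Lemma is_deriveD' (f g : R -> R) r df dg : is_derive r (1:R) f df -> is_derive r (1:R) g dg ->
  is_derive r (1:R) (fun r => f r + g r) (df + dg).
Proof. move=> Hf Hg; exact: (is_deriveD Hf Hg). Qed.

Lemma is_deriveB' (f g : R -> R) r df dg : is_derive r (1:R) f df -> is_derive r (1:R) g dg ->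
  is_derive r (1:R) (fun r => f r - g r) (df - dg).
Proof. move=> Hf Hg; exact: (is_deriveB Hf Hg). Qed.

Lemma ReM (z w : C) : complex.Re (z * w) = complex.Re z * complex.Re w - complex.Im z * complex.Im w.
Proof. by case: z => a b; case: w. Qed.

Lemma ImM (z w : C) : complex.Im (z * w) = complex.Re z * complex.Im w + complex.Im z * complex.Re w.
Proof. by case: z => a b; case: w. Qed.

Lemma Re_polar (e u w : R) : complex.Re ((e%:C : C) * (u +i* w)) = e * u.
Proof. by rewrite ReM /= mul0r subr0. Qed.

Lemma Im_polar (e u w : R) : complex.Im ((e%:C : C) * (u +i* w)) = e * w.
Proof. by rewrite ImM /= mul0r addr0. Qed.

Lemma cos2_sin2 (y : R) : cos y ^+ 2 + sin y ^+ 2 = 1.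
Proof. by rewrite sin2cos2 addrC subrK. Qed.

Lemma expR_inv (y : R) : expR (- y) * expR y = 1.
Proof. by rewrite -expRD addNr expR0. Qed.

Lemma exp_form (f : C -> C) (mu x c : C) : c != 0 ->
  (forall t, is_derive t (1:C) f (mu * f t)) -> forall s : R,
  f (x + s%:C * c) = f x * ((expR (complex.Re (c * mu) * s))%:C *
     (cos (complex.Im (c * mu) * s) +i* sin (complex.Im (c * mu) * s))).
Proof.
move=> c0 Hd s.
set a := complex.Re (c * mu); set b := complex.Im (c * mu).
pose p := fun r : R => complex.Re (f (x + r%:C * c)).
pose q := fun r : R => complex.Re (- 'i * f (x + r%:C * c)).
have Hd' : forall t, is_derive t (1:C) (fun t => - 'i * f t) (- 'i * (mu * f t)).
  by move=> t; exact: (is_deriveZ (- 'i) (Hd t)).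
have Hp : forall r, is_derive r (1:R) p (a * p r - b * q r).
  move=> r; apply: (is_derive_eq (deriv_re f x c _ r c0 (Hd _))).
  by rewrite mulrA ReM /p /q !Re_mNi.
have Hq : forall r, is_derive r (1:R) q (a * q r + b * p r).
  move=> r; apply: (is_derive_eq (deriv_re (fun t => - 'i * f t) x c _ r c0 (Hd' _))).
  rewrite /p /q Re_mNi.
  have -> : c * (- 'i * (mu * f (x + r%:C * c))) = - 'i * ((c * mu) * f (x + r%:C * c)).
    by rewrite !mulrA [c * - 'i]mulrC.
  by rewrite Re_mNi ImM addrC.
have He : forall r, is_derive r (1:R) (fun r => expR (- a * r)) (expR (- a * r) * (- a)).
  by move=> r; apply: is_derive_compl; exact: is_derive_expR.
have Hc : forall r, is_derive r (1:R) (fun r => cos (b * r)) (- sin (b * r) * b).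
  by move=> r; apply: is_derive_compl; exact: is_derive_cos.
have Hs : forall r, is_derive r (1:R) (fun r => sin (b * r)) (cos (b * r) * b).
  by move=> r; apply: is_derive_compl; exact: is_derive_sin.
pose u := fun r => expR (- a * r) * (p r * cos (b * r) + q r * sin (b * r)).
pose v := fun r => expR (- a * r) * (q r * cos (b * r) - p r * sin (b * r)).
have Hu : forall r, is_derive r (1:R) u 0.
  move=> r; rewrite /u /v; apply: is_derive_eq.
  by rewrite /GRing.scale /=; ring.
have Hv : forall r, is_derive r (1:R) v 0.
  move=> r; rewrite /u /v; apply: is_derive_eq.
  by rewrite /GRing.scale /=; ring.
have H0 : x + (0:R)%:C * c = x by rewrite mul0r addr0.
have Hu0 : u s = complex.Re (f x).
  rewrite (@is_derive_0_is_cst _ _ s 0 Hu) /u /p /q H0 !mulr0 expR0 cos0 sin0.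
  by rewrite mulr0 addr0 mulr1 mul1r.
have Hv0 : v s = complex.Im (f x).
  rewrite (@is_derive_0_is_cst _ _ s 0 Hv) /v /p /q H0 !mulr0 expR0 cos0 sin0.
  by rewrite mulr0 subr0 mulr1 mul1r Re_mNi.
have EE := expR_inv (a * s).
have CS := cos2_sin2 (b * s).
apply: eqC.
  rewrite ReM Re_polar Im_polar -Hu0 -Hv0 /u /v -/(p s) -/(q s) mulNr.
  transitivity ((expR (- (a * s)) * expR (a * s)) * (p s * (cos (b * s) ^+ 2 + sin (b * s) ^+ 2))).
    by rewrite EE CS !mul1r mulr1.
  by ring.
rewrite ImM Re_polar Im_polar -Hu0 -Hv0 /u /v -/(p s) -/(q s) mulNr.
have -> : complex.Im (f (x + s%:C * c)) = q s by rewrite /q Re_mNi.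
transitivity ((expR (- (a * s)) * expR (a * s)) * (q s * (cos (b * s) ^+ 2 + sin (b * s) ^+ 2))).
  by rewrite EE CS !mul1r mulr1.
by ring.
Qed.

Lemma polar (w : C) : w != 0 -> exists r th : R, w = (expR r)%:C * (cos th +i* sin th).
Proof.
case: w => x y w0.
set n := Num.sqrt (x ^+ 2 + y ^+ 2).
have s0 : 0 <= x ^+ 2 + y ^+ 2 by rewrite addr_ge0 ?sqr_ge0.
have nn : n ^+ 2 = x ^+ 2 + y ^+ 2 by rewrite sqr_sqrtr.
have n0 : 0 < n.
  rewrite sqrtr_gt0 lt_def s0 andbT paddr_eq0 ?sqr_ge0 // !sqrf_eq0.
  apply/negP => /andP[/eqP x0 /eqP y0]; move: w0; rewrite x0 y0.
  by rewrite eqxx.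
have nne : n != 0 by rewrite gt_eqF.
set u := x / n.
have hu' : `|u| <= 1.
  rewrite /u normrM normfV (gtr0_norm n0) ler_pdivrMr // mul1r.
  rewrite -sqrtr_sqr ler_sqrt //.
  by rewrite -[X in X <= _]addr0 lerD2l sqr_ge0.
have hu : -1 <= u <= 1 by move: hu'; rewrite ler_norml.
have hs : 1 - u ^+ 2 = (y / n) ^+ 2.
  rewrite /u !expr_div_n.
  apply: (mulIf (x := n ^+ 2)); first by rewrite expf_neq0.
  rewrite mulrBl !divfK ?expf_neq0 // mul1r nn.
  by rewrite addrAC subrr add0r.
have hsin : sin (acos u) = `|y| / n.
  by rewrite sin_acos // hs sqrtr_sqr normrM normfV (gtr0_norm n0).
have hcos : cos (acos u) = u by rewrite acosK // in_itv /= hu.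
exists (ln n), (if 0 <= y then acos u else - acos u).
rewrite lnK ?posrE //.
apply: eqC; rewrite ?Re_polar ?Im_polar /=.
  by case: ifP => _; rewrite ?cosN hcos /u mulrC divfK.
case: ifP => hy; rewrite ?sinN hsin.
  by rewrite ger0_norm // mulrC divfK.
rewrite ltr0_norm ?ltNge ?hy // mulrN mulrC divfK // opprK //.
Qed.

Lemma i_neq0 : ('i : C) != 0.
Proof. by apply/eqP => /(congr1 (@complex.Im R)) /= /eqP; rewrite oner_eq0. Qed.

Lemma exp_surj (f : C -> C) (mu : C) : mu != 0 ->
  (forall t, is_derive t (1:C) f (mu * f t)) -> f 0 != 0 ->
  forall w, w != 0 -> exists t, f t = w.
Proof.
move=> mu0 Hd f0 w w0.
have [r [th Hw]] := polar (w / f 0) (mulf_neq0 w0 (invr_neq0 f0)).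
have c1 : mu^-1 != 0 by rewrite invr_neq0.
have c2 : 'i * mu^-1 != 0 by rewrite mulf_neq0 ?i_neq0.
exists (r%:C * mu^-1 + th%:C * ('i * mu^-1)).
rewrite (exp_form _ _ _ _ c2 Hd th).
have -> : r%:C * mu^-1 = 0 + r%:C * mu^-1 by rewrite add0r.
rewrite (exp_form _ _ _ _ c1 Hd r) mulVf // divfK //.
rewrite /= !mul0r !mul1r cos0 sin0 expR0.
have -> : (1 +i* 0 : C) = 1 by [].
have -> : ((1:R)%:C : C) = 1 by [].
by rewrite mulr1 mul1r -mulrA -Hw mulrC divfK.
Qed.
End S.

Section Gen.
Variable K : numFieldType.
Implicit Types f g : K -> K.

Lemma gM f g t df dg : is_derive t (1:K) f df -> is_derive t (1:K) g dg ->
  is_derive t (1:K) (fun t => f t * g t) (df * g t + f t * dg).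
Proof.
move=> Hf Hg; apply: (is_derive_eq (is_deriveM Hf Hg)).
by rewrite addrC; congr (_ + _); exact: mulrC.
Qed.

Lemma gD f g t df dg : is_derive t (1:K) f df -> is_derive t (1:K) g dg ->
  is_derive t (1:K) (fun t => f t + g t) (df + dg).
Proof. move=> Hf Hg; exact: (is_deriveD Hf Hg). Qed.

Lemma gB f g t df dg : is_derive t (1:K) f df -> is_derive t (1:K) g dg ->
  is_derive t (1:K) (fun t => f t - g t) (df - dg).
Proof. move=> Hf Hg; exact: (is_deriveB Hf Hg). Qed.

Lemma gZ f t (k : K) df : is_derive t (1:K) f df ->
  is_derive t (1:K) (fun t => k * f t) (k * df).
Proof. move=> Hf; exact: (is_deriveZ k Hf). Qed.
End Gen.

Section Main.
Variable R : realType.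
Local Notation C := (Cx R).

Lemma main_aux (x y z : Cx R) (X Y Z : Cx R -> Cx R) :
  inM x y z -> z != 0 -> 4%:R - 9%:R * z ^+ 2 != 0 ->
  is_flow_Vz X Y Z x y z ->
  (forall t : Cx R, Z t = z /\ inM (X t) (Y t) z) /\
  (forall u v : Cx R, inM u v z ->
     exists t : Cx R, [/\ X t = u, Y t = v & Z t = z]).
Proof.
rewrite /inM => Hxyz z0 hz [X0 Y0 Z0 Hd].
have HZ : forall t, Z t = z.
  move=> t; rewrite -Z0; apply: const_deriv0 => s; by case: (Hd s).
pose F := fun t => X t * X t + Y t * Y t + Z t * Z t - 3%:R * (X t * Y t * Z t).
have HF : forall t, is_derive t (1:C) F 0.
  move=> t; case: (Hd t) => HX HY HZ'.
  rewrite /F; apply: is_derive_eq.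
  by rewrite /GRing.scale /=; ring.
have Hinv : forall t, X t ^+ 2 + Y t ^+ 2 + z ^+ 2 = 3%:R * X t * Y t * z.
  move=> t; apply/eqP; rewrite -subr_eq0; apply/eqP.
  have E := @const_deriv0 R _ HF t; rewrite /F X0 Y0 Z0 !HZ in E.
  transitivity (X t * X t + Y t * Y t + z * z - 3%:R * (X t * Y t * z)); first by ring.
  rewrite E; transitivity (x ^+ 2 + y ^+ 2 + z ^+ 2 - 3%:R * x * y * z); first by ring.
  by rewrite Hxyz subrr.
split; first by move=> t; split; [exact: HZ | exact: Hinv].
move=> u v Huv.
set L := sqrtC (9%:R * z ^+ 2 - 4%:R).
have HL : L ^+ 2 = 9%:R * z ^+ 2 - 4%:R := sqrtCK _.
have two0 : (2%:R : C) != 0 by rewrite pnatr_eq0.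
have L0 : L != 0.
  apply/eqP => L0; move: HL; rewrite L0 expr0n /= => /esym /eqP.
  rewrite subr_eq0 => /eqP H; move: hz; by rewrite H subrr eqxx.
pose A := fun t => 2%:R * X t - (3%:R * z + L) * Y t.
pose B := fun t => 2%:R * X t - (3%:R * z - L) * Y t.
have HA : forall t, is_derive t (1:C) A (L * A t).
  move=> t; case: (Hd t) => HX HY _; rewrite /A; apply: is_derive_eq.
  rewrite /GRing.scale /= !HZ; apply/eqP; rewrite -subr_eq0; apply/eqP.
  transitivity ((L ^+ 2 - (9%:R * z ^+ 2 - 4%:R)) * Y t); first by ring.
  by rewrite HL subrr mul0r.
have HB : forall t, is_derive t (1:C) B (- L * B t).
  move=> t; case: (Hd t) => HX HY _; rewrite /B; apply: is_derive_eq.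
  rewrite /GRing.scale /= !HZ; apply/eqP; rewrite -subr_eq0; apply/eqP.
  transitivity ((L ^+ 2 - (9%:R * z ^+ 2 - 4%:R)) * Y t); first by ring.
  by rewrite HL subrr mul0r.
have key : forall p q : C, p ^+ 2 + q ^+ 2 + z ^+ 2 = 3%:R * p * q * z ->
    (2%:R * p - (3%:R * z + L) * q) * (2%:R * p - (3%:R * z - L) * q) = - 4%:R * z ^+ 2.
  move=> p q Hpq.
  transitivity (4%:R * ((p ^+ 2 + q ^+ 2 + z ^+ 2) - 3%:R * p * q * z) - 4%:R * z ^+ 2
     + ((9%:R * z ^+ 2 - 4%:R) - L ^+ 2) * q ^+ 2); first by ring.
  by rewrite Hpq HL !subrr mulr0 mul0r add0r addr0 mulNr.
have hz2 : - 4%:R * z ^+ 2 != 0 by rewrite mulf_neq0 ?oppr_eq0 ?pnatr_eq0 ?expf_neq0.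
have A0 : A 0 != 0.
  apply/eqP => H; move: (key _ _ (Hinv 0)); rewrite -/(A 0) -/(B 0) H mul0r => /esym /eqP.
  by rewrite (negbTE hz2).
set a1 := 2%:R * u - (3%:R * z + L) * v.
set b1 := 2%:R * u - (3%:R * z - L) * v.
have Hab1 := key _ _ Huv; rewrite -/a1 -/b1 in Hab1.
have a10 : a1 != 0.
  by apply/eqP => H; move: Hab1; rewrite H mul0r => /esym /eqP; rewrite (negbTE hz2).
have [t Ht] := @exp_surj R A L L0 HA A0 a1 a10.
have Hbt : B t = b1.
  have := key _ _ (Hinv t); rewrite -/(A t) -/(B t) Ht -Hab1.
  exact: mulfI.
have Ey : (2%:R * L) * (Y t - v) = 0.
  transitivity ((B t - b1) - (A t - a1)); first by rewrite /A /B /a1 /b1; ring.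
  by rewrite Ht Hbt !subrr ?subr0.
have Yt : Y t = v.
  by move/eqP: Ey; rewrite !mulf_eq0 (negbTE two0) (negbTE L0) /= subr_eq0 => /eqP.
have Ex : 2%:R * (X t - u) = 0.
  transitivity ((A t - a1) + (3%:R * z + L) * (Y t - v)); first by rewrite /A /a1; ring.
  by rewrite Ht Yt !subrr mulr0 addr0.
exists t; split; last exact: HZ.
  by move/eqP: Ex; rewrite mulf_eq0 (negbTE two0) /= subr_eq0 => /eqP.
exact: Yt.
Qed.
End Main.


Local Close Scope classical_set_scope.

Theorem lemma6p5 (R : realType) (x y z : Cx R) (X Y Z : Cx R -> Cx R) :
  inM x y z -> z != 0 -> 4%:R - 9%:R * z ^+ 2 != 0 ->
  is_flow_Vz X Y Z x y z ->
  (forall t : Cx R, Z t = z /\ inM (X t) (Y t) z) /\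
  (forall u v : Cx R, inM u v z ->
     exists t : Cx R, [/\ X t = u, Y t = v & Z t = z]).
Proof. exact: main_aux. Qed.
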